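(* Let $\sigma,\eta>0$ and $\mathscr{C}$ be a family of balls as in the context. Let $B_0\in\mathscr{C}$ with $0\in B_0$, let $R>0$ be such that $B_0^{(7)}\subset B(0,R)$, and let $\mathscr{C}_R:=\{B\in\mathscr{C}: B\cap B(0,R)\neq\emptyset\}$. Then there is a constant $C$ depending only on $\eta$ such that for every $B\in\mathscr{C}_R$, \[ |x_B|\le CR\quad\text{and}\quad r_B\le CR. \]
   Context: Cover: for constants $\sigma,\eta>0$, $\mathscr{C}$ is a family of closed balls in $\mathbb{R}^3$ with $\bigcup_{B\in\mathscr{C}}B=\mathbb{R}^3$ and $|B|\geq 4\pi/3$ for all $B\in\mathscr{C}$, such that (i) each ball in $\mathscr{C}$ intersects at most $\sigma$ balls in $\mathscr{C}$, and (ii) if $B,B'\in\mathscr{C}$ intersect then $\eta^{-1}\le |B|^{1/3}/|B'|^{1/3}\le\eta$. $x_B$ and $r_B$ denote the center and radius of $B$. Layers: for $B\in\mathscr{C}$ set $B^{(0)}:=B$, $P^{(0)}:=\{B\}$, and for $n\ge1$, $P^{(n)}:=\{B'\in\mathscr{C}: B'\cap B^{(n-1)}\neq\emptyset\}$, $B^{(n)}:=\bigcup_{B'\in P^{(n)}}B'$. *)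

(* Defs.v *)
From Stdlib Require Import Reals Lra List.
Open Scope R_scope.

Definition point := (R * R * R)%type.

Definition norm3 (p : point) : R :=
  let '(a, b, c) := p in sqrt (a * a + b * b + c * c).

Definition dist3 (p q : point) : R :=
  let '(a1, b1, c1) := p in
  let '(a2, b2, c2) := q in
  sqrt ((a1 - a2) * (a1 - a2) + (b1 - b2) * (b1 - b2) + (c1 - c2) * (c1 - c2)).

Record ball := mkBall { center : point ; radius : R }.

Definition in_ball (B : ball) (x : point) : Prop := dist3 x (center B) <= radius B.

Definition vol (B : ball) : R := 4 / 3 * PI * radius B ^ 3.

Definition intersects (B B' : ball) : Prop := exists x, in_ball B x /\ in_ball B' x.

Definition is_cover (sigma eta : R) (C : ball -> Prop) : Prop :=
  (forall x : point, exists B, C B /\ in_ball B x) /\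
  (forall B, C B -> vol B >= 4 * PI / 3) /\
  (forall B, C B -> forall L : list ball, NoDup L ->
     (forall B', In B' L -> C B' /\ intersects B B') -> INR (length L) <= sigma) /\
  (forall B B', C B -> C B' -> intersects B B' ->
     / eta <= Rpower (vol B) (1/3) / Rpower (vol B') (1/3) <= eta).

(* Layers: layer C n B is the set B^(n) *)
Fixpoint layer (C : ball -> Prop) (n : nat) (B : ball) : point -> Prop :=
  match n with
  | O => in_ball B
  | S m => fun x => exists B', C B' /\ (exists y, layer C m B y /\ in_ball B' y) /\ in_ball B' x
  end.

Definition in_ball0 (R0 : R) (x : point) : Prop := norm3 x <= R0.

(* Main.v *)
Require Import Defs.
From Stdlib Require Import Reals Lra List ClassicalEpsilon Classical.
Open Scope R_scope.

Lemma sqrt_scale (k a b c : R) :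
  sqrt ((k*a)*(k*a)+(k*b)*(k*b)+(k*c)*(k*c)) = Rabs k * sqrt (a*a+b*b+c*c).
Proof.
  replace ((k*a)*(k*a)+(k*b)*(k*b)+(k*c)*(k*c)) with (Rsqr k * (a*a+b*b+c*c))
    by (unfold Rsqr; ring).
  rewrite sqrt_mult_alt by apply Rle_0_sqr.
  now rewrite sqrt_Rsqr_abs.
Qed.

Lemma minkowski (u1 u2 u3 v1 v2 v3 : R) :
  sqrt ((u1+v1)*(u1+v1)+(u2+v2)*(u2+v2)+(u3+v3)*(u3+v3)) <=
  sqrt (u1*u1+u2*u2+u3*u3) + sqrt (v1*v1+v2*v2+v3*v3).
Proof.
  set (U := u1*u1+u2*u2+u3*u3). set (V := v1*v1+v2*v2+v3*v3).
  assert (HU : 0 <= U) by (unfold U; nra).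
  assert (HV : 0 <= V) by (unfold V; nra).
  set (d := u1*v1+u2*v2+u3*v3).
  assert (Hd : d <= sqrt U * sqrt V).
  { rewrite <- sqrt_mult_alt by exact HU.
    apply Rle_trans with (Rabs d). apply Rle_abs.
    rewrite <- sqrt_Rsqr_abs. apply sqrt_le_1_alt.
    unfold Rsqr, d, U, V.
    pose proof (Rle_0_sqr (u1*v2-u2*v1)). pose proof (Rle_0_sqr (u1*v3-u3*v1)).
    pose proof (Rle_0_sqr (u2*v3-u3*v2)). unfold Rsqr in *.
    match goal with |- ?a <= ?b => replace b with (a + ((u1*v2-u2*v1)*(u1*v2-u2*v1) + (u1*v3-u3*v1)*(u1*v3-u3*v1) + (u2*v3-u3*v2)*(u2*v3-u3*v2))) by ring end.
    lra. }
  assert (HsU := sqrt_pos U). assert (HsV := sqrt_pos V).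
  rewrite <- (sqrt_Rsqr (sqrt U + sqrt V)) by lra.
  apply sqrt_le_1_alt. unfold Rsqr.
  replace ((sqrt U + sqrt V) * (sqrt U + sqrt V)) with
    (sqrt U * sqrt U + sqrt V * sqrt V + 2 * (sqrt U * sqrt V)) by ring.
  rewrite !sqrt_sqrt by assumption.
  unfold U, V, d in *. nra.
Qed.

Lemma dist3_tri (p q r : point) : dist3 p r <= dist3 p q + dist3 q r.
Proof.
  destruct p as [[p1 p2] p3]; destruct q as [[q1 q2] q3]; destruct r as [[r1 r2] r3].
  unfold dist3.
  pose proof (minkowski (p1-q1) (p2-q2) (p3-q3) (q1-r1) (q2-r2) (q3-r3)) as H.
  replace (p1 - q1 + (q1 - r1)) with (p1 - r1) in H by ring.
  replace (p2 - q2 + (q2 - r2)) with (p2 - r2) in H by ring.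
  replace (p3 - q3 + (q3 - r3)) with (p3 - r3) in H by ring.
  exact H.
Qed.

Lemma dist3_sym (p q : point) : dist3 p q = dist3 q p.
Proof.
  destruct p as [[p1 p2] p3]; destruct q as [[q1 q2] q3]; unfold dist3.
  f_equal; ring.
Qed.

Lemma dist3_pos (p q : point) : 0 <= dist3 p q.
Proof. destruct p as [[p1 p2] p3]; destruct q as [[q1 q2] q3]; apply sqrt_pos. Qed.

Lemma norm3_dist (p : point) : norm3 p = dist3 p (0,0,0).
Proof. destruct p as [[p1 p2] p3]; unfold norm3, dist3; f_equal; ring. Qed.

Lemma dist3_refl (p : point) : dist3 p p = 0.
Proof. destruct p as [[p1 p2] p3]; unfold dist3.
  replace (p1-p1) with 0 by ring. replace (p2-p2) with 0 by ring.
  replace (p3-p3) with 0 by ring. replace (0*0+0*0+0*0) with 0 by ring.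
  apply sqrt_0. Qed.

Lemma sep (D E : ball) : 0 <= radius D -> 0 <= radius E ->
  ~ intersects D E -> radius D + radius E < dist3 (center D) (center E).
Proof.
  intros hD hE H. apply Rnot_le_lt. intro Hle. apply H.
  destruct D as [[[c1 c2] c3] r]; destruct E as [[[e1 e2] e3] s]; cbn [radius center] in *.
  destruct (Req_dec (r+s) 0) as [H0|H0].
  - assert (r = 0) by lra. assert (s = 0) by lra. subst.
    assert (Hd := dist3_pos (c1,c2,c3) (e1,e2,e3)).
    assert (Hz : dist3 (c1,c2,c3) (e1,e2,e3) = 0) by lra.
    exists (c1,c2,c3). unfold in_ball; cbn [radius center]. split.
    + rewrite dist3_refl; lra.
    + lra.
  - set (k := r/(r+s)).
    exists (c1 + k*(e1-c1), c2 + k*(e2-c2), c3 + k*(e3-c3)).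
    unfold in_ball; cbn [radius center]. unfold dist3 in *.
    assert (Hk0 : 0 <= k) by (unfold k; unfold Rdiv; apply Rle_mult_inv_pos; lra).
    assert (Hk1 : 1 - k = s/(r+s)) by (unfold k; field; lra).
    assert (Hs0 : 0 <= s/(r+s)) by (unfold Rdiv; apply Rle_mult_inv_pos; lra).
    split.
    + replace (c1 + k * (e1 - c1) - c1) with (k*(e1-c1)) by ring.
      replace (c2 + k * (e2 - c2) - c2) with (k*(e2-c2)) by ring.
      replace (c3 + k * (e3 - c3) - c3) with (k*(e3-c3)) by ring.
      rewrite sqrt_scale, Rabs_pos_eq by lra.
      replace (sqrt ((e1 - c1) * (e1 - c1) + (e2 - c2) * (e2 - c2) + (e3 - c3) * (e3 - c3)))
        with (sqrt ((c1 - e1) * (c1 - e1) + (c2 - e2) * (c2 - e2) + (c3 - e3) * (c3 - e3)))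
        by (f_equal; ring).
      apply Rle_trans with (k*(r+s)). apply Rmult_le_compat_l; lra.
      unfold k; right; field; lra.
    + replace (c1 + k * (e1 - c1) - e1) with ((1-k)*(c1-e1)) by ring.
      replace (c2 + k * (e2 - c2) - e2) with ((1-k)*(c2-e2)) by ring.
      replace (c3 + k * (e3 - c3) - e3) with ((1-k)*(c3-e3)) by ring.
      rewrite sqrt_scale, Rabs_pos_eq by lra.
      apply Rle_trans with ((1-k)*(r+s)). apply Rmult_le_compat_l; lra.
      rewrite Hk1; right; field; lra.
Qed.
Lemma pair_alg (a1 a2 a3 b1 b2 b3 ri rj e : R) :
  (ri+rj-e)*(ri+rj-e) < (a1-b1)*(a1-b1)+(a2-b2)*(a2-b2)+(a3-b3)*(a3-b3) ->
  a1*a1+a2*a2+a3*a3 <= ri*ri -> b1*b1+b2*b2+b3*b3 <= rj*rj -> 0 <= e ->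
  a1*b1+a2*b2+a3*b3 < - (ri*rj) + e*(ri+rj).
Proof. intros. nra. Qed.

Lemma final_alg (x1 y1 z1 x2 y2 z2 x3 y3 z3 r1 r2 r3 e M : R) :
  0 < M -> 0 <= e -> 8*e <= M -> M <= r1 -> M <= r2 -> M <= r3 ->
  x1*x1+y1*y1+z1*z1 <= r1*r1 -> x2*x2+y2*y2+z2*z2 <= r2*r2 -> x3*x3+y3*y3+z3*z3 <= r3*r3 ->
  x1*x2+y1*y2+z1*z2 < - (r1*r2) + e*(r1+r2) ->
  x1*x3+y1*y3+z1*z3 < - (r1*r3) + e*(r1+r3) ->
  x2*x3+y2*y3+z2*z3 < - (r2*r3) + e*(r2+r3) -> False.
Proof.
  intros HM He H8 H1 H2 H3 N1 N2 N3 D12 D13 D23.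
  set (n1 := x1*x1+y1*y1+z1*z1) in *. set (n2 := x2*x2+y2*y2+z2*z2) in *.
  set (n3 := x3*x3+y3*y3+z3*z3) in *.
  set (d12 := x1*x2+y1*y2+z1*z2) in *. set (d13 := x1*x3+y1*y3+z1*z3) in *.
  set (d23 := x2*x3+y2*y3+z2*z3) in *.
  set (P := r1*r2*r3).
  assert (Hr1 : 0 < r1) by lra. assert (Hr2 : 0 < r2) by lra. assert (Hr3 : 0 < r3) by lra.
  assert (HP : 0 < P) by (unfold P; repeat apply Rmult_lt_0_compat; lra).
  set (S1 := r2*r3*x1 + r1*r3*x2 + r1*r2*x3).
  set (S2 := r2*r3*y1 + r1*r3*y2 + r1*r2*y3).
  set (S3 := r2*r3*z1 + r1*r3*z2 + r1*r2*z3).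
  assert (HS : 0 <= S1*S1+S2*S2+S3*S3) by nra.
  assert (Hid : S1*S1+S2*S2+S3*S3 = (r2*r3)*(r2*r3)*n1 + (r1*r3)*(r1*r3)*n2 + (r1*r2)*(r1*r2)*n3
     + 2*P*(r3*d12 + r2*d13 + r1*d23)) by (unfold S1,S2,S3,n1,n2,n3,d12,d13,d23,P; ring).
  assert (B1 : (r2*r3)*(r2*r3)*n1 <= P*P).
  { replace (P*P) with ((r2*r3)*(r2*r3)*(r1*r1)) by (unfold P; ring).
    apply Rmult_le_compat_l; [nra|lra]. }
  assert (B2 : (r1*r3)*(r1*r3)*n2 <= P*P).
  { replace (P*P) with ((r1*r3)*(r1*r3)*(r2*r2)) by (unfold P; ring).
    apply Rmult_le_compat_l; [nra|lra]. }
  assert (B3 : (r1*r2)*(r1*r2)*n3 <= P*P).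
  { replace (P*P) with ((r1*r2)*(r1*r2)*(r3*r3)) by (unfold P; ring).
    apply Rmult_le_compat_l; [nra|lra]. }
  assert (E12 : e*r1*r2 <= P/8).
  { apply Rle_trans with (M/8*r1*r2). apply Rmult_le_compat_r; [lra|].
    apply Rmult_le_compat_r; lra.
    unfold P. apply Rle_trans with (r3/8*r1*r2). apply Rmult_le_compat_r; [lra|].
    apply Rmult_le_compat_r; lra. right; field. }
  assert (E13 : e*r1*r3 <= P/8).
  { apply Rle_trans with (M/8*r1*r3). apply Rmult_le_compat_r; [lra|].
    apply Rmult_le_compat_r; lra.
    unfold P. apply Rle_trans with (r2/8*r1*r3). apply Rmult_le_compat_r; [lra|].
    apply Rmult_le_compat_r; lra. right; field. }
  assert (E23 : e*r2*r3 <= P/8).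
  { apply Rle_trans with (M/8*r2*r3). apply Rmult_le_compat_r; [lra|].
    apply Rmult_le_compat_r; lra.
    unfold P. apply Rle_trans with (r1/8*r2*r3). apply Rmult_le_compat_r; [lra|].
    apply Rmult_le_compat_r; lra. right; field. }
  assert (T12 : r3*d12 < r3*(- (r1*r2) + e*(r1+r2))) by (apply Rmult_lt_compat_l; lra).
  assert (T13 : r2*d13 < r2*(- (r1*r3) + e*(r1+r3))) by (apply Rmult_lt_compat_l; lra).
  assert (T23 : r1*d23 < r1*(- (r2*r3) + e*(r2+r3))) by (apply Rmult_lt_compat_l; lra).
  assert (T : r3*d12 + r2*d13 + r1*d23 < -3*P + 6*(P/8)).
  { assert (r3*(- (r1*r2) + e*(r1+r2)) + r2*(- (r1*r3) + e*(r1+r3)) + r1*(- (r2*r3) + e*(r2+r3))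
      = -3*P + 2*(e*r1*r2) + 2*(e*r1*r3) + 2*(e*r2*r3)) by (unfold P; ring).
    lra. }
  assert (T' : 2*P*(r3*d12 + r2*d13 + r1*d23) < 2*P*(-3*P + 6*(P/8))).
  { apply Rmult_lt_compat_l; lra. }
  assert (HPP : 0 < P*P) by nra.
  lra.
Qed.

Lemma nsq_nonneg (a b c : R) : 0 <= a*a+b*b+c*c.
Proof. pose proof (Rle_0_sqr a); pose proof (Rle_0_sqr b); pose proof (Rle_0_sqr c); unfold Rsqr in *; lra. Qed.

Lemma sqrt_le_sq (X r : R) : 0 <= X -> sqrt X <= r -> X <= r*r.
Proof. intros HX H. pose proof (sqrt_pos X). rewrite <- (sqrt_sqrt X HX). nra. Qed.

Lemma sq_lt_sqrt (X t : R) : 0 <= t -> t < sqrt X -> t*t < X.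
Proof. intros Ht H. apply Rnot_le_lt. intro Hle.
  apply (sqrt_le_1_alt _ _) in Hle. rewrite sqrt_square in Hle by lra. lra. Qed.

Lemma rigid (D1 D2 D3 : ball) (a1 a2 a3 : point) (e M : R) :
 0 < M -> 0 <= e -> 8*e <= M -> M <= radius D1 -> M <= radius D2 -> M <= radius D3 ->
 in_ball D1 a1 -> in_ball D2 a2 -> in_ball D3 a3 ->
 dist3 a1 a2 <= e -> dist3 a1 a3 <= e -> dist3 a2 a3 <= e ->
 ~ intersects D1 D2 -> ~ intersects D1 D3 -> ~ intersects D2 D3 -> False.
Proof.
  intros HM He H8 R1 R2 R3 I1 I2 I3 E12 E13 E23 N12 N13 N23.
  pose proof (sep D1 D2 ltac:(lra) ltac:(lra) N12) as S12.
  pose proof (sep D1 D3 ltac:(lra) ltac:(lra) N13) as S13.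
  pose proof (sep D2 D3 ltac:(lra) ltac:(lra) N23) as S23.
  destruct D1 as [[[c1 c2] c3] r1]; destruct D2 as [[[f1 f2] f3] r2];
  destruct D3 as [[[g1 g2] g3] r3]; cbn [radius center] in *.
  destruct a1 as [[p1 p2] p3]; destruct a2 as [[q1 q2] q3]; destruct a3 as [[s1 s2] s3].
  unfold in_ball, dist3 in *; cbn [radius center] in *.
  apply sqrt_le_sq in I1; try apply nsq_nonneg. apply sqrt_le_sq in I2; try apply nsq_nonneg. apply sqrt_le_sq in I3; try apply nsq_nonneg.
  assert (K : forall (c1 c2 c3 p1 p2 p3 f1 f2 f3 q1 q2 q3 r1 r2 : R),
    r1 + r2 < sqrt ((c1 - f1) * (c1 - f1) + (c2 - f2) * (c2 - f2) + (c3 - f3) * (c3 - f3)) ->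
    sqrt ((p1 - q1) * (p1 - q1) + (p2 - q2) * (p2 - q2) + (p3 - q3) * (p3 - q3)) <= e ->
    0 <= r1 + r2 - e ->
    (r1+r2-e)*(r1+r2-e) < ((c1-p1)-(f1-q1))*((c1-p1)-(f1-q1)) + ((c2-p2)-(f2-q2))*((c2-p2)-(f2-q2))
        + ((c3-p3)-(f3-q3))*((c3-p3)-(f3-q3))).
  { clear. intros c1 c2 c3 p1 p2 p3 f1 f2 f3 q1 q2 q3 r1 r2 Hs He H0.
    apply sq_lt_sqrt; [lra|].
    pose proof (minkowski ((c1-p1)-(f1-q1)) ((c2-p2)-(f2-q2)) ((c3-p3)-(f3-q3))
                  (p1-q1) (p2-q2) (p3-q3)) as Hm.
    replace (c1 - p1 - (f1 - q1) + (p1 - q1)) with (c1 - f1) in Hm by ring.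
    replace (c2 - p2 - (f2 - q2) + (p2 - q2)) with (c2 - f2) in Hm by ring.
    replace (c3 - p3 - (f3 - q3) + (p3 - q3)) with (c3 - f3) in Hm by ring.
    lra. }
  pose proof (K _ _ _ _ _ _ _ _ _ _ _ _ _ _ S12 E12 ltac:(lra)) as K12.
  pose proof (K _ _ _ _ _ _ _ _ _ _ _ _ _ _ S13 E13 ltac:(lra)) as K13.
  pose proof (K _ _ _ _ _ _ _ _ _ _ _ _ _ _ S23 E23 ltac:(lra)) as K23.
  apply (final_alg (c1-p1) (c2-p2) (c3-p3) (f1-q1) (f2-q2) (f3-q3) (g1-s1) (g2-s2) (g3-s3)
     r1 r2 r3 e M); try lra.
  all: apply pair_alg; lra.
Qed.

Lemma radius_ge1 sigma eta C D : is_cover sigma eta C -> C D -> 1 <= radius D.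
Proof.
  intros [_ [Hv _]] HD. specialize (Hv D HD). unfold vol in Hv.
  pose proof PI_RGT_0. set (r := radius D) in *.
  assert (H3 : 1 <= r^3).
  { apply Rmult_le_reg_l with (4/3*PI). lra. lra. }
  simpl in H3. destruct (Rle_or_lt 1 r) as [|Hr]; [lra|].
  destruct (Rle_or_lt r 0); nra.
Qed.

Lemma rpow_vol (D : ball) : 0 < radius D ->
  Rpower (vol D) (1/3) = Rpower (4/3*PI) (1/3) * radius D.
Proof.
  intro Hr. pose proof PI_RGT_0. unfold vol.
  rewrite <- Rpower_mult_distr; [|lra|apply pow_lt; lra].
  f_equal. rewrite <- (Rpower_pow 3 (radius D) Hr). rewrite Rpower_mult.
  replace (INR 3 * (1/3)) with 1 by (simpl; field). apply Rpower_1; exact Hr.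
Qed.

Lemma ratio sigma eta C D E : is_cover sigma eta C -> C D -> C E -> intersects D E ->
  radius D <= eta * radius E.
Proof.
  intros Hc HD HE HI.
  pose proof (radius_ge1 _ _ _ _ Hc HD). pose proof (radius_ge1 _ _ _ _ Hc HE).
  destruct Hc as [_ [_ [_ Hr]]]. destruct (Hr D E HD HE HI) as [_ H2].
  rewrite !rpow_vol in H2 by lra.
  assert (Hk : 0 < Rpower (4/3*PI) (1/3)) by apply exp_pos.
  replace (Rpower (4 / 3 * PI) (1 / 3) * radius D / (Rpower (4 / 3 * PI) (1 / 3) * radius E))
    with (radius D / radius E) in H2 by (field; lra).
  apply Rmult_le_compat_r with (r := radius E) in H2; [|lra].
  unfold Rdiv in H2. rewrite Rmult_assoc, Rinv_l, Rmult_1_r in H2 by lra. exact H2.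
Qed.

Lemma int_sym D E : intersects D E -> intersects E D.
Proof. intros [x [h1 h2]]; exists x; tauto. Qed.

Definition meets (D : ball) (p : point) (d : R) := exists z, in_ball D z /\ dist3 z p <= d.

Lemma ramsey sigma eta C (L : list ball) (P : ball -> Prop) :
  0 < sigma -> is_cover sigma eta C -> NoDup L -> 2*sigma + 2 < INR (length L) ->
  (forall D, In D L -> C D /\ P D) ->
  exists D1 D2 D3, C D1 /\ C D2 /\ C D3 /\ P D1 /\ P D2 /\ P D3 /\
    ~ intersects D1 D2 /\ ~ intersects D1 D3 /\ ~ intersects D2 D3.
Proof.
  intros Hs Hc HN Hlen HL.
  destruct Hc as [_ [_ [Hi _]]].
  destruct L as [|D1 L'] eqn:EL. { simpl in Hlen; lra. }
  rewrite <- EL in *.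
  assert (HD1 : In D1 L) by (rewrite EL; left; auto).
  assert (X2 : exists D2, In D2 L /\ ~ intersects D1 D2).
  { apply NNPP; intro Hn. assert (INR (length L) <= sigma).
    { apply (Hi D1 (proj1 (HL D1 HD1)) L HN). intros B' HB'. split. apply (HL B' HB').
      apply NNPP; intro; apply Hn; exists B'; auto. }
    lra. }
  destruct X2 as [D2 [HD2 N12]].
  assert (X3 : exists D3, In D3 L /\ ~ intersects D1 D3 /\ ~ intersects D2 D3).
  { apply NNPP; intro Hn.
    set (f := fun D => if excluded_middle_informative (intersects D1 D) then true else false).
    pose proof (filter_length f L) as Hfl.
    assert (A1 : INR (length (filter f L)) <= sigma).
    { apply (Hi D1 (proj1 (HL D1 HD1))). apply NoDup_filter; auto.
      intros B' HB'. apply filter_In in HB'. destruct HB' as [HB' Hf].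
      split. apply (HL B' HB'). unfold f in Hf.
      destruct (excluded_middle_informative (intersects D1 B')); auto; discriminate. }
    assert (A2 : INR (length (filter (fun x => negb (f x)) L)) <= sigma).
    { apply (Hi D2 (proj1 (HL D2 HD2))). apply NoDup_filter; auto.
      intros B' HB'. apply filter_In in HB'. destruct HB' as [HB' Hf].
      split. apply (HL B' HB'). unfold f in Hf.
      destruct (excluded_middle_informative (intersects D1 B')) as [|Hn1]; [discriminate|].
      apply NNPP; intro Hn2. apply Hn. exists B'; auto. }
    rewrite <- Hfl, plus_INR in Hlen. lra. }
  destruct X3 as [D3 [HD3 [N13 N23]]].
  exists D1, D2, D3.
  destruct (HL D1 HD1), (HL D2 HD2), (HL D3 HD3). tauto.
Qed.

Lemma LF sigma eta C : 0 < sigma -> is_cover sigma eta C -> forall p,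
  exists d, 0 < d /\ forall D, C D -> meets D p d -> in_ball D p.
Proof.
  intros Hs Hc p. apply NNPP; intro Hn.
  assert (H : forall d, 0 < d -> exists D, C D /\ meets D p d /\ ~ in_ball D p).
  { intros d hd. apply NNPP; intro H'. apply Hn. exists d; split; auto.
    intros D HD HM. apply NNPP; intro Hp. apply H'. exists D; auto. }
  set (g := fun D => dist3 p (center D) - radius D).
  assert (Hb : forall N, exists L, NoDup L /\ length L = N /\
     forall D, In D L -> C D /\ (meets D p (1/16) /\ ~ in_ball D p)).
  { induction N as [|N IHN].
    - exists nil; split; [constructor|split; [reflexivity| intros D []]].
    - destruct IHN as [L [HL1 [HL2 HL3]]].
      set (m := fold_right (fun D acc => Rmin (g D) acc) 1 L).
      assert (Hm : 0 < m /\ forall D, In D L -> m <= g D).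
      { unfold m; clear -HL3. induction L as [|a L IH]; simpl.
        - split; [lra| tauto].
        - destruct IH as [IH1 IH2]. { intros D HD; apply HL3; right; auto. }
          destruct (HL3 a (or_introl eq_refl)) as [_ [_ Ha]].
          unfold in_ball in Ha. assert (0 < g a) by (unfold g; lra).
          split. apply Rmin_glb_lt; auto.
          intros D [<-|HD]. apply Rmin_l.
          eapply Rle_trans. apply Rmin_r. auto. }
      destruct Hm as [Hm0 Hm1].
      assert (Hd : 0 < Rmin (1/16) (m/2)) by (apply Rmin_glb_lt; lra).
      destruct (H _ Hd) as [D' [HC [HM HN]]].
      exists (D' :: L). split; [|split].
      + constructor; auto. intro Hin. specialize (Hm1 D' Hin).
        destruct HM as [z [Hz1 Hz2]]. unfold in_ball in Hz1.
        pose proof (dist3_tri p z (center D')). rewrite (dist3_sym p z) in H0.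
        pose proof (Rmin_r (1/16) (m/2)). unfold g in Hm1. lra.
      + simpl; auto.
      + intros D [<-|HD]; [|auto]. split; auto. split; auto.
        destruct HM as [z [Hz1 Hz2]]. exists z; split; auto.
        pose proof (Rmin_l (1/16) (m/2)); lra. }
  destruct (INR_archimed 1 (2*sigma+2)) as [n Hn']; [lra|].
  destruct (Hb n) as [L [HL1 [HL2 HL3]]].
  destruct (ramsey sigma eta C L (fun D => meets D p (1/16)) Hs Hc HL1)
    as [D1 [D2 [D3 [C1 [C2 [C3 [[z1 [I1 J1]] [[z2 [I2 J2]] [[z3 [I3 J3]] [N12 [N13 N23]]]]]]]]]]].
  { rewrite HL2; lra. }
  { intros D HD; destruct (HL3 D HD); tauto. }
  apply (rigid D1 D2 D3 z1 z2 z3 (1/8) 1); try lra; auto.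
  - eapply radius_ge1; eauto.
  - eapply radius_ge1; eauto.
  - eapply radius_ge1; eauto.
  - pose proof (dist3_tri z1 p z2); rewrite (dist3_sym p z2) in H0; lra.
  - pose proof (dist3_tri z1 p z3); rewrite (dist3_sym p z3) in H0; lra.
  - pose proof (dist3_tri z2 p z3); rewrite (dist3_sym p z3) in H0; lra.
Qed.

Definition segf (y : point) (s : R) : point :=
  let '(y1, y2, y3) := y in ((1-s)*y1, (1-s)*y2, (1-s)*y3).

Lemma segf_norm y s : norm3 (segf y s) = Rabs (1-s) * norm3 y.
Proof. destruct y as [[y1 y2] y3]; unfold segf, norm3. apply sqrt_scale. Qed.

Lemma segf_dist y s s' : dist3 (segf y s) (segf y s') = Rabs (s'-s) * norm3 y.
Proof. destruct y as [[y1 y2] y3]; unfold segf, norm3, dist3.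
  rewrite <- sqrt_scale. f_equal; ring. Qed.

Lemma segf0 y : segf y 0 = y.
Proof. destruct y as [[y1 y2] y3]; unfold segf; f_equal; [f_equal|]; ring. Qed.

Lemma segf1 y : segf y 1 = (0,0,0).
Proof. destruct y as [[y1 y2] y3]; unfold segf; f_equal; [f_equal|]; ring. Qed.

Lemma norm3_pos y : 0 <= norm3 y.
Proof. destruct y as [[y1 y2] y3]; apply sqrt_pos. Qed.

Lemma scale sigma eta C B0 B y R0 t : 0 < sigma -> is_cover sigma eta C -> 1 <= eta ->
  C B0 -> in_ball B0 (0,0,0) -> radius B0 <= R0 -> 0 < R0 -> C B -> in_ball B y ->
  norm3 y <= R0 -> R0 <= t -> t < radius B ->
  exists D, C D /\ (exists z, in_ball D z /\ norm3 z <= R0) /\ t < radius D /\ radius D <= eta * t.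
Proof.
  intros Hs Hc He HB0 H0 HrB0 HR0 HB Hy HyR Ht HtB.
  apply NNPP; intro Hgap.
  assert (Hsm : forall E, C E -> (exists z, in_ball E z /\ norm3 z <= R0) ->
                 radius E <= eta*t -> radius E <= t).
  { intros E HE HQ Hr. apply Rnot_lt_le; intro. apply Hgap. exists E; auto. }
  destruct (Rle_or_lt (radius B) (eta*t)) as [Hb|Hb].
  { apply Hgap. exists B. split; auto. split; [exists y; auto|]. auto. }
  assert (Fn : forall s, 0 <= s <= 1 -> norm3 (segf y s) <= R0).
  { intros s hs. rewrite segf_norm, Rabs_pos_eq by lra.
    pose proof (norm3_pos y). nra. }
  set (S := fun s => 0 <= s <= 1 /\ exists D, C D /\ eta*t < radius D /\ in_ball D (segf y s)).
  assert (HS0 : S 0). { split; [lra|]. exists B. rewrite segf0; auto. }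
  destruct (completeness S) as [ss [Hub Hlub]].
  { exists 1. intros x [hx _]; lra. }
  { exists 0; auto. }
  assert (Hss0 : 0 <= ss) by (apply Hub; auto).
  assert (Hss1 : ss <= 1) by (apply Hlub; intros x [hx _]; lra).
  set (p := segf y ss).
  destruct (LF sigma eta C Hs Hc p) as [d [Hd HLF]].
  set (h := d/(R0+1)).
  assert (Hh : 0 < h) by (unfold h; apply Rdiv_lt_0_compat; lra).
  assert (Hclose : forall s, Rabs (s - ss) <= h -> dist3 (segf y s) p <= d).
  { intros s hs. unfold p. rewrite segf_dist.
    rewrite <- Rabs_Ropp. replace (- (ss - s)) with (s - ss) by ring.
    pose proof (norm3_pos y). pose proof (Rabs_pos (s - ss)).
    apply Rle_trans with (h*R0). apply Rmult_le_compat; auto.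
    unfold h. apply Rle_trans with (d/(R0+1) * (R0+1)). apply Rmult_le_compat_l; [fold h; lra|lra].
    right; field; lra. }
  assert (Xs : exists s, S s /\ ss - h < s).
  { apply NNPP; intro Hn. assert (ss <= ss - h); [|lra].
    apply Hlub. intros x Hx. apply Rnot_lt_le; intro. apply Hn; exists x; auto. }
  destruct Xs as [s [[hs [D [HD [HDr HDs]]]] Hs2]].
  assert (Hsle : s <= ss) by (apply Hub; split; [auto| exists D; auto]).
  assert (HDp : in_ball D p).
  { apply HLF; auto. exists (segf y s). split; auto. apply Hclose.
    rewrite Rabs_left1 by lra. lra. }
  destruct (Rle_or_lt 1 ss) as [H1|H1].
  - assert (ss = 1) by lra. unfold p in HDp. rewrite H, segf1 in HDp.
    assert (radius D <= eta * radius B0).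
    { apply (ratio sigma eta C); auto. exists (0,0,0); auto. }
    nra.
  - set (s' := Rmin 1 (ss + h/2)).
    assert (Hs'1 : ss < s').
    { unfold s'. apply Rmin_glb_lt; lra. }
    assert (Hs'2 : s' <= ss + h/2) by apply Rmin_r.
    assert (Hs'3 : s' <= 1) by apply Rmin_l.
    destruct Hc as [Hcov Hrest]. destruct (Hcov (segf y s')) as [E [HE HEs]].
    assert (HEr : radius E <= eta * t).
    { apply Rnot_lt_le; intro. assert (s' <= ss); [|lra].
      apply Hub. split; [lra|]. exists E; auto. }
    assert (HEt : radius E <= t).
    { apply Hsm; auto. exists (segf y s'); split; auto. apply Fn; lra. }
    assert (HEp : in_ball E p).
    { apply HLF; auto. exists (segf y s'). split; auto. apply Hclose.
      rewrite Rabs_pos_eq by lra. lra. }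
    assert (radius D <= eta * radius E).
    { apply (ratio sigma eta C); auto. split; auto. exists p; auto. }
    nra.
Qed.

Lemma layer_mono sigma eta C B0 : is_cover sigma eta C ->
  forall n x, layer C n B0 x -> layer C (S n) B0 x.
Proof.
  intros [Hcov _] n x Hx. destruct (Hcov x) as [B' [HB' Hx']].
  simpl. exists B'. split; auto. split; auto. exists x; auto.
Qed.

Lemma layer_0_7 sigma eta C B0 x : is_cover sigma eta C -> in_ball B0 x -> layer C 7 B0 x.
Proof.
  intros Hc Hx. do 7 (apply (layer_mono sigma eta C B0 Hc)). exact Hx.
Qed.

Lemma ball_in_R0 (D : ball) R0 : 0 <= radius D -> (forall x, in_ball D x -> in_ball0 R0 x) ->
  radius D <= R0.
Proof.
  intros Hr H. destruct D as [[[c1 c2] c3] r]; cbn [radius] in *.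
  assert (Hu : in_ball0 R0 (c1+r, c2, c3)).
  { apply H. unfold in_ball, dist3; cbn [radius center].
    replace ((c1 + r - c1) * (c1 + r - c1) + (c2 - c2) * (c2 - c2) + (c3 - c3) * (c3 - c3))
      with (r*r) by ring. rewrite sqrt_square; lra. }
  assert (Hv : in_ball0 R0 (c1-r, c2, c3)).
  { apply H. unfold in_ball, dist3; cbn [radius center].
    replace ((c1 - r - c1) * (c1 - r - c1) + (c2 - c2) * (c2 - c2) + (c3 - c3) * (c3 - c3))
      with (r*r) by ring. rewrite sqrt_square; lra. }
  unfold in_ball0 in *. rewrite norm3_dist in Hu, Hv.
  pose proof (dist3_tri (c1+r,c2,c3) (0,0,0) (c1-r,c2,c3)) as T.
  rewrite (dist3_sym (0,0,0)) in T.
  unfold dist3 at 1 in T.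
  replace ((c1 + r - (c1 - r)) * (c1 + r - (c1 - r)) + (c2 - c2) * (c2 - c2) + (c3 - c3) * (c3 - c3))
    with ((2*r)*(2*r)) in T by ring.
  rewrite sqrt_square in T by lra. lra.
Qed.

Theorem proposition3p5 :
  forall eta : R, 0 < eta ->
  exists Cst : R,
  forall (sigma : R) (C : ball -> Prop),
    0 < sigma -> is_cover sigma eta C ->
    forall (B0 : ball) (R0 : R),
      C B0 -> in_ball B0 (0, 0, 0) -> 0 < R0 ->
      (forall x, layer C 7 B0 x -> in_ball0 R0 x) ->
      forall B : ball, C B -> (exists y, in_ball B y /\ in_ball0 R0 y) ->
        norm3 (center B) <= Cst * R0 /\ radius B <= Cst * R0.
Proof.
  intros eta Heta. exists (1 + 16*(eta*eta*(eta*eta))).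
  intros sigma C Hs Hc B0 R0 HB0 H0 HR0 H7 B HB [y [Hy HyR]].
  pose proof (radius_ge1 _ _ _ _ Hc HB0) as Hr0.
  assert (He : 1 <= eta).
  { pose proof (ratio sigma eta C B0 B0 Hc HB0 HB0 ltac:(exists (0,0,0); auto)). nra. }
  assert (HrB0 : radius B0 <= R0).
  { apply ball_in_R0; [lra|]. intros x Hx. apply H7. eapply layer_0_7; eauto. }
  set (e2 := eta*eta) in *. set (e4 := e2*e2) in *.
  assert (He2 : 1 <= e2) by (unfold e2; nra).
  assert (He4 : e2 <= e4) by (unfold e4; nra).
  assert (HrB : radius B <= 16*e4*R0).
  { apply Rnot_lt_le; intro Hbig.
    destruct (scale sigma eta C B0 B y R0 (16*R0) Hs Hc He HB0 H0 HrB0 HR0 HB Hy HyR)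
      as [D1 [C1 [[z1 [I1 Q1]] [L1 U1]]]]; [lra|nra|].
    destruct (scale sigma eta C B0 B y R0 (16*e2*R0) Hs Hc He HB0 H0 HrB0 HR0 HB Hy HyR)
      as [D2 [C2 [[z2 [I2 Q2]] [L2 U2]]]]; [nra|nra|].
    destruct (scale sigma eta C B0 B y R0 (16*e4*R0) Hs Hc He HB0 H0 HrB0 HR0 HB Hy HyR)
      as [D3 [C3 [[z3 [I3 Q3]] [L3 U3]]]]; [nra|nra|].
    assert (U1' : eta * radius D1 <= 16*e2*R0).
    { replace (16*e2*R0) with (eta*(eta*(16*R0))) by (unfold e2; ring).
      apply Rmult_le_compat_l; lra. }
    assert (U2' : eta * radius D2 <= 16*e4*R0).
    { replace (16*e4*R0) with (eta*(eta*(16*e2*R0))) by (unfold e4, e2; ring).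
      apply Rmult_le_compat_l; [lra|]. replace (eta*(16*e2*R0)) with (eta*(16*e2*R0)) by ring. lra. }
    apply (rigid D1 D2 D3 z1 z2 z3 (2*R0) (16*R0)); try lra; try assumption.
    1,2: nra.
    - unfold in_ball0 in *. rewrite norm3_dist in Q1, Q2.
      pose proof (dist3_tri z1 (0,0,0) z2). rewrite (dist3_sym (0,0,0) z2) in H. lra.
    - unfold in_ball0 in *. rewrite norm3_dist in Q1, Q3.
      pose proof (dist3_tri z1 (0,0,0) z3). rewrite (dist3_sym (0,0,0) z3) in H. lra.
    - unfold in_ball0 in *. rewrite norm3_dist in Q2, Q3.
      pose proof (dist3_tri z2 (0,0,0) z3). rewrite (dist3_sym (0,0,0) z3) in H. lra.
    - intro HI. pose proof (ratio sigma eta C D2 D1 Hc C2 C1 (int_sym _ _ HI)). lra.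
    - intro HI. pose proof (ratio sigma eta C D3 D1 Hc C3 C1 (int_sym _ _ HI)).
      assert (16*e2*R0 <= 16*e4*R0) by nra. lra.
    - intro HI. pose proof (ratio sigma eta C D3 D2 Hc C3 C2 (int_sym _ _ HI)). lra. }
  split.
  - unfold in_ball, in_ball0 in *. rewrite norm3_dist in *.
    pose proof (dist3_tri (center B) y (0,0,0)). rewrite (dist3_sym (center B) y) in H. nra.
  - nra.
Qed.
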